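(* Let $k\geq2$ and let $W\subseteq\mathbb{Z}_{3k}$, $\overline W=\mathbb{Z}_{3k}\setminus W$, satisfy: for every $i\in\mathbb{Z}_{3k}$, $|x^i\cap W|\geq2$ and $|C^i\cap\overline W|\geq2$; and for every $i\in\overline W$, $[i+2k,i+2k+\omega(i)]_{3k}\subseteq W$. Then $p^i\not\equiv0\pmod 3$ for every $i\in\overline W$.
   Context: $\mathbb{Z}_{3k}=\{0,\dots,3k-1\}$ with addition modulo $3k$; $[a,b]_{3k}$ is the cyclic closed interval from $a$ to $b$. $C^i=\{i,\dots,i+k-1\}$ (mod $3k$), $x^i=\{i,i+k,i+2k\}$. For $i\in\overline W$, $\omega(i)=\min\{t\ge0:i+k+t\in\overline W\}$. For $i\in\overline W$ the sequence $(r^i_t)_{t\ge0}\subseteq\mathbb{Z}_{3k}$ is defined by $r^i_0=i$ and $r^i_t=r^i_{t-1}+k+\omega(r^i_{t-1})$ for $t\ge1$ (all terms lie in $\overline W$), and $p^i=\max\{t\geq0:\sum_{j=0}^{t-1}\omega(r^i_j)\leq k-1\}$. *)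

(* Defs.v *)
(* Z_{3k} is modelled as 'I_(3*k); arithmetic on
   representatives is done in nat and reduced with %% (3*k). *)
From mathcomp Require Import all_boot.
Set Implicit Arguments. Unset Strict Implicit. Unset Printing Implicit Defensive.

Definition inW (k : nat) (W : {set 'I_(3*k)}) (a : nat) : bool :=
  [exists x : 'I_(3*k), (val x == a %% (3*k)) && (x \in W)].

Definition Cset (k i : nat) : {set 'I_(3*k)} :=
  [set j : 'I_(3*k) | [exists t : 'I_k, val j == (i + t) %% (3*k)]].

Definition xset (k i : nat) : {set 'I_(3*k)} :=
  [set j : 'I_(3*k) | [|| val j == i %% (3*k), val j == (i + k) %% (3*k)
                       | val j == (i + 2*k) %% (3*k)]].

(* omega(i) = min {t >= 0 : i+k+t in Wbar}.  Since residues mod 3k repeat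
   with period 3k, the minimum (when it exists) is < 3k, so it is the first
   index t in [0,3k) with i+k+t in Wbar (computed by find). *)
Definition omega (k : nat) (W : {set 'I_(3*k)}) (i : nat) : nat :=
  find (fun t => ~~ inW W (i + k + t)) (iota 0 (3*k)).

Fixpoint rseq (k : nat) (W : {set 'I_(3*k)}) (i : nat) (t : nat) : nat :=
  match t with
  | 0 => i %% (3*k)
  | t'.+1 => (rseq W i t' + k + omega W (rseq W i t')) %% (3*k)
  end.

Definition omsum (k : nat) (W : {set 'I_(3*k)}) (i t : nat) : nat :=
  \sum_(0 <= j < t) omega W (rseq W i j).

Definition is_p (k : nat) (W : {set 'I_(3*k)}) (i p : nat) : Prop :=
  omsum W i p <= k - 1 /\ (forall t, omsum W i t <= k - 1 -> t <= p).

(* Main.v *)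
Require Import Defs.
From mathcomp Require Import all_boot.
From mathcomp Require Import zify.
Set Implicit Arguments.

Section Aux.
Variables (k : nat) (W : {set 'I_(3*k)}).

Lemma inW_mod a : inW W (a %% (3*k)) = inW W a.
Proof. by rewrite /inW modn_mod. Qed.

Lemma inW_eqmod a b : a %% (3*k) = b %% (3*k) -> inW W a = inW W b.
Proof. by move=> e; rewrite -inW_mod e inW_mod. Qed.

Lemma inW_ord (x : 'I_(3*k)) : inW W x = (x \in W).
Proof.
apply/existsP/idP => [[y /andP[/eqP e yW]]|xW].
- have -> : x = y by apply: val_inj; rewrite /= e modn_small.
  done.
- by exists x; rewrite modn_small // eqxx xW.
Qed.

Lemma omega_spec a (y : 'I_(3*k)) : y \notin W -> ~~ inW W (a + k + omega W a).
Proof.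
move=> yW.
have Hpos : 0 < 3*k by apply: leq_ltn_trans (leq0n y) (ltn_ord y).
set N := 3*k.
have Hh : has (fun t => ~~ inW W (a + k + t)) (iota 0 N).
  apply/hasP; exists ((y + N - (a+k)%%N) %% N).
    by rewrite mem_iota /= add0n ltn_pmod.
  rewrite -inW_mod modnDmr.
  set r := (a+k) %% N. set q := (a+k) %/ N.
  have E : a + k = q * N + r by rewrite /q /r -divn_eq.
  have rN : r < N by rewrite /r ltn_pmod.
  have yN : y < N by apply: ltn_ord.
  rewrite E.
  have -> : q * N + r + (y + N - r) = q.+1 * N + y by lia.
  by rewrite modnMDl modn_small // inW_ord.
have Hlt : find (fun t => ~~ inW W (a + k + t)) (iota 0 N) < N.
  by rewrite -[X in _ < X](size_iota 0 N) -has_find.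
have := nth_find 0 Hh.
by rewrite nth_iota // add0n.
Qed.

Lemma omega_pos (x : 'I_(3*k)) : x \notin W -> 2 <= #|xset k x :&: W| ->
  0 < omega W x.
Proof.
move=> xW H.
have Hpos : 0 < 3*k by apply: leq_ltn_trans (leq0n x) (ltn_ord x).
rewrite lt0n; apply/negP => /eqP H0.
have := @omega_spec x x xW; rewrite H0 addn0 => Hk.
have : xset k x :&: W \subset [set Ordinal (ltn_pmod (x + 2*k) Hpos)].
  apply/subsetP => j; rewrite /xset !inE => /andP[/or3P[]/eqP e jW].
  - have ej : j = x by apply: val_inj; rewrite /= e modn_small.
    by move: xW; rewrite -ej jW.
  - by move: Hk; rewrite -inW_mod -e inW_ord jW.
  - by apply/eqP; apply: val_inj; exact e.
move/subset_leq_card; rewrite cards1 => H1.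
by have := leq_trans H H1.
Qed.

Lemma rseq_lt (Hpos : 0 < 3*k) i t : rseq W i t < 3*k.
Proof. by case: t => [|t] /=; apply: ltn_pmod. Qed.

Lemma rseq_notin (i : 'I_(3*k)) : i \notin W -> forall t, ~~ inW W (rseq W i t).
Proof.
move=> iW; elim => [|t IH] /=.
  by rewrite inW_mod inW_ord.
by rewrite inW_mod; exact: omega_spec iW.
Qed.

Lemma omsum_S i t : omsum W i t.+1 = omsum W i t + omega W (rseq W i t).
Proof. by rewrite /omsum big_nat_recr. Qed.

Lemma omsum0 i : omsum W i 0 = 0.
Proof. by rewrite /omsum big_geq. Qed.

Lemma rseq_eq i t : rseq W i t = (i + t*k + omsum W i t) %% (3*k).
Proof.
elim: t => [|t IH] /=.
  by rewrite omsum0 mul0n !addn0.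
rewrite {1}IH -addnA modnDml omsum_S; congr (_ %% _); lia.
Qed.

End Aux.

Theorem mainTheorem9 (k : nat) (W : {set 'I_(3*k)}) :
  2 <= k ->
  (forall i : 'I_(3*k), 2 <= #|xset k i :&: W|) ->
  (forall i : 'I_(3*k), 2 <= #|Cset k i :&: ~: W|) ->
  (forall i : 'I_(3*k), i \notin W ->
     forall t, t <= omega W i -> inW W (i + 2*k + t)) ->
  forall i : 'I_(3*k), i \notin W ->
    exists p, is_p W i p /\ p %% 3 != 0.
Proof.
move=> k2 Hx _ Hom i iW.
have Hpos : 0 < 3*k by apply: leq_ltn_trans (leq0n i) (ltn_ord i).
have xnot : forall t, Ordinal (@rseq_lt k W Hpos i t) \notin W.
  by move=> t; rewrite -inW_ord /=; apply: rseq_notin.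
have Hge : forall t, t <= omsum W i t.
  elim => [|t IH] //; rewrite omsum_S.
  have := @omega_pos k W _ (xnot t) (Hx _); rewrite /= => H; lia.
have Pex : exists t, (fun t => omsum W i t <= k - 1) t.
  by exists 0; rewrite /= omsum0.
have Pub : forall t, (fun t => omsum W i t <= k - 1) t -> t <= k - 1.
  by move=> t /= H; apply: leq_trans (Hge t) H.
case: (@ex_maxnP (fun t => omsum W i t <= k - 1) (k - 1) Pex Pub) => p /= Pp Pmax.
exists p; split; first by split.
apply/negP => /eqP p3.
have Hn : ~~ (omsum W i p.+1 <= k-1).
  by apply/negP => H; have := Pmax _ H; rewrite ltnn.
rewrite omsum_S -ltnNge in Hn.
have := Hom _ (xnot p) (k - omsum W i p).
rewrite /= => H.
have {}H := H ltac:(lia).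
move: H; rewrite (@inW_eqmod k W _ i) ?inW_ord ?(negbTE iW) //.
rewrite rseq_eq -!addnA modnDml.
have Ep := divn_eq p 3; rewrite p3 addn0 in Ep.
set m := p %/ 3 in Ep.
set s := omsum W i p in Pp *.
have -> : i + (p * k + s) + (k + (k + (0 + (k - s)))) = m.+1 * (3*k) + i.
  rewrite Ep; lia.
by rewrite modnMDl.
Qed.
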